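(* Let $T$ be an almost reduced linear trellis with $C(T)=C$. If $T$ is mergeable, then by merging vertices of $T$ one obtains a linear trellis $T'$ with $C(T')=C$ that is smaller than $T$.
   Context: Let $\mathbb{F}$ be a finite field and $n\ge1$; indices are taken in $\mathbb{Z}_n$. A trellis $T$ of length $n$ over $\mathbb{F}$ consists of pairwise disjoint finite vertex sets $V_i(T)$, $i\in\mathbb{Z}_n$, and edge sets $E_i(T)\subseteq V_i(T)\times\mathbb{F}\times V_{i+1}(T)$; $(v,\alpha,w)\in E_i(T)$ is an edge from $v$ to $w$ with label $\alpha$. Trellises are trim (each vertex has an outgoing and an incoming edge). $T$ is linear if each $V_i(T)$ is an $\mathbb{F}$-vector space and each $E_i(T)$ a subspace of $V_i(T)\times\mathbb{F}\times V_{i+1}(T)$. A cycle is a closed path of length $n$ starting (and ending) at a vertex of $V_0(T)$; $C(T)\subseteq\mathbb{F}^n$ is the set of label sequences of cycles. $T$ is almost reduced if every vertex lies on some cycle. Merging two vertices $v\ne w$ of the same $V_i(T)$ means identifying them into one vertex (keeping all edges). $T$ is mergeable if there exist $i$ and $v\ne w\in V_i(T)$ such that the trellis obtained by merging $v$ and $w$ represents the same code as $T$. A trellis $T'$ of length $n$ is smaller than $T$ if $|V_i(T')|\le|V_i(T)|$ for all $i$ with at least one strict inequality. *)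

(* Defs.v *)
From HB Require Import structures.
From mathcomp Require Import all_boot all_order all_algebra.
Unset Strict Implicit. Unset Printing Implicit Defensive.
Import GRing.Theory.
Local Open Scope ring_scope.

(* Indices are taken in Z_n, represented by 'I_n with the cyclic successor
   ordS (i |-> i+1 mod n).  Vertex sets V_i are modelled as finite types
   (distinct types per index, so pairwise disjointness is automatic).     *)

Section Trellis.
Variables (F : finFieldType) (n : nat).

Record trellis := Trellis {
  vtx : 'I_n -> finType;
  edge : forall i : 'I_n, {set (vtx i * F * vtx (ordS i))%type}
}.

Definition tvtx (T : trellis) := {i : 'I_n & vtx T i}.

Definition trim (T : trellis) : Prop :=
  forall (i : 'I_n) (x : vtx T i),
    (exists e, e \in edge T i /\ e.1.1 = x) /\
    (exists (j : 'I_n) e, e \in edge T j /\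
        Tagged (vtx T) e.2 = Tagged (vtx T) x).

Definition is_cycle (T : trellis) (u : forall i : 'I_n, vtx T i)
    (c : 'rV[F]_n) : Prop :=
  forall i : 'I_n, (u i, c ord0 i, u (ordS i)) \in edge T i.

Definition code (T : trellis) (c : 'rV[F]_n) : Prop :=
  exists u, is_cycle T u c.

Definition same_code (T1 T2 : trellis) : Prop :=
  forall c, code T1 c <-> code T2 c.

Definition almost_reduced (T : trellis) : Prop :=
  forall (i : 'I_n) (x : vtx T i), exists u c, is_cycle T u c /\ u i = x.

Definition merge_eq (T : trellis) (p q x y : tvtx T) : Prop :=
  x = y \/ (x = p /\ y = q) \/ (x = q /\ y = p).

(* The code of the trellis obtained from T by merging the vertices p and q
   (of the same V_i): a cycle of the merged trellis is a sequence of edges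
   e_j \in E_j (each kept, with endpoints p,q replaced by the merged vertex)
   such that the head of e_j and the tail of e_{j+1} coincide after merging. *)
Definition merged_code (T : trellis) (p q : tvtx T) (c : 'rV[F]_n) : Prop :=
  exists e : forall j : 'I_n, (vtx T j * F * vtx T (ordS j))%type,
    forall j : 'I_n,
      [/\ e j \in edge T j, (e j).1.2 = c ord0 j &
          merge_eq T p q (Tagged (vtx T) (e j).2)
                       (Tagged (vtx T) (e (ordS j)).1.1)].

Definition mergeable (T : trellis) : Prop :=
  exists (i : 'I_n) (v w : vtx T i),
    v <> w /\ forall c, merged_code T (Tagged (vtx T) v) (Tagged (vtx T) w) c
                        <-> code T c.

Definition smaller (T1 T2 : trellis) : Prop :=
  (forall i : 'I_n, #|vtx T1 i| <= #|vtx T2 i|)%N /\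
  (exists i : 'I_n, #|vtx T1 i| < #|vtx T2 i|)%N.

(* Linear trellises: each V_i is an F-vector space, (WLOG, being finite)
   V_i = F^(d_i), and each E_i a subspace of V_i x F x V_{i+1}. *)
Record ltrellis := LTrellis {
  ldim : 'I_n -> nat;
  ledge : forall i : 'I_n,
    {set ('rV[F]_(ldim i) * F * 'rV[F]_(ldim (ordS i)))%type}
}.

Definition ltrellis_trellis (T : ltrellis) : trellis :=
  @Trellis (fun i => 'rV[F]_(ldim T i) : finType) (ledge T).
Coercion ltrellis_trellis : ltrellis >-> trellis.

Definition tcomb (m k : nat) (a : F) (x y : 'rV[F]_m * F * 'rV[F]_k) :=
  (a *: x.1.1 + y.1.1, a * x.1.2 + y.1.2, a *: x.2 + y.2).

Definition is_linear (T : ltrellis) : Prop :=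
  forall i : 'I_n,
    (0, 0, 0) \in ledge T i /\
    forall (a : F) x y, x \in ledge T i -> y \in ledge T i ->
      tcomb (ldim T i) (ldim T (ordS i)) a x y \in ledge T i.

Definition obtained_by_merging (T1 T2 : ltrellis) : Prop :=
  exists phi : forall i : 'I_n, 'rV[F]_(ldim T1 i) -> 'rV[F]_(ldim T2 i),
    [/\ forall i (a : F) x y, phi i (a *: x + y) = a *: phi i x + phi i y,
        forall i y, exists x, phi i x = y &
        forall i, ledge T2 i =
          [set (phi i e.1.1, e.1.2, phi (ordS i) e.2) | e in ledge T1 i]].

End Trellis.
Arguments Trellis {F n}.
Arguments vtx {F n}.
Arguments edge {F n}.
Arguments trim {F n}.
Arguments code {F n}.
Arguments same_code {F n}.
Arguments almost_reduced {F n}.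
Arguments mergeable {F n}.
Arguments smaller {F n}.
Arguments ldim {F n}.
Arguments ledge {F n}.
Arguments is_linear {F n}.
Arguments obtained_by_merging {F n}.

(* Main.v *)
Require Import Defs.
From HB Require Import structures.
From mathcomp Require Import all_boot all_order all_algebra.
From mathcomp Require Import ring.
Import GRing.Theory.
Local Open Scope ring_scope.

Section Quot.
Variables (F : finFieldType) (m : nat).

Definition qdim (D : 'rV[F]_m) : nat :=
  if [pick k | D ord0 k != 0] is Some _ then m.-1 else m.

Definition quot (D : 'rV[F]_m) (x : 'rV[F]_m) : 'rV[F]_(qdim D) :=
  match [pick k | D ord0 k != 0] as o
    return 'rV[F]_(if o is Some _ then m.-1 else m) with
  | Some k => col' k (x - (x ord0 k / D ord0 k) *: D)
  | None => x
  end.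

Lemma quot_lin D (a : F) x y : quot D (a *: x + y) = a *: quot D x + quot D y.
Proof.
rewrite /quot /qdim; case: pickP => [k Hk|//].
apply/rowP => j; rewrite !mxE /=. ring.
Qed.

Lemma quot_surj D y : exists x, quot D x = y.
Proof.
move: y; rewrite /quot /qdim; case: pickP => [k Hk|_] y; last by exists y.
exists (\row_l (if unlift k l is Some l' then y ord0 l' else 0)).
apply/rowP => j; rewrite !mxE unlift_none liftK mul0r mul0r subr0.
by [].
Qed.

Lemma quot_ker D x y : quot D x = quot D y -> exists a, x - y = a *: D.
Proof.
rewrite /quot /qdim; case: pickP => [k Hk|H] E; last first.
  exists 0; rewrite scale0r; move: E => ->; by rewrite subrr.
exists ((x ord0 k - y ord0 k) / D ord0 k).
apply/rowP => l; rewrite !mxE.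
case: (unliftP k l) => [l' ->|->].
  have := congr1 (fun M : 'rV_ _ => M ord0 l') E; rewrite !mxE => E'.
  rewrite -[x ord0 (lift k l')](subrK (x ord0 k / D ord0 k * D ord0 (lift k l'))).
  rewrite E'. ring.
by rewrite mulfVK.
Qed.

Lemma qdim_le D : (qdim D <= m)%N.
Proof. rewrite /qdim; case: pickP => // k _; exact: leq_pred. Qed.

Lemma qdim_lt D : D != 0 -> (qdim D < m)%N.
Proof.
move=> HD; rewrite /qdim; case: pickP => [k _|H].
  by case: m k => [[]|m'] //.
case/eqP: HD; apply/rowP => j; rewrite mxE; have := H j; rewrite ord1.
by move/negbFE/eqP.
Qed.
End Quot.
Arguments quot {F m}. Arguments qdim {F m}.
Arguments quot_lin {F m}. Arguments quot_surj {F m}. Arguments quot_ker {F m}. Arguments qdim_le {F m}. Arguments qdim_lt {F m}.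

Lemma quot0 (F : finFieldType) m (D : 'rV[F]_m) : quot D 0 = 0.
Proof. rewrite /quot /qdim; case: pickP => // k _; apply/rowP => j; rewrite !mxE; ring. Qed.

Lemma tag_map (I : Type) (P Q : I -> Type) (f : forall i, P i -> Q i) i1 i2
  (a : P i1) (b : P i2) : Tagged P a = Tagged P b -> Tagged Q (f i1 a) = Tagged Q (f i2 b).
Proof. move=> H. exact (f_equal (fun s : {x : I & P x} => Tagged Q (f (tag s) (tagged s))) H). Qed.

Lemma cardF_gt1 (F : finFieldType) : (1 < #|F|)%N.
Proof. apply/card_gt1P; exists 0 => //; exists 1 => //; by rewrite eq_sym oner_neq0. Qed.

Section Build.
Variables (F : finFieldType) (n : nat) (T : ltrellis F n) (i : 'I_n)
  (D : 'rV[F]_(ldim T i)).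

Definition Dof (j : 'I_n) : 'rV[F]_(ldim T j) :=
  match j =P i with
  | ReflectT e => ecast k 'rV[F]_(ldim T k) (esym e) D
  | ReflectF _ => 0 end.

Lemma Dof_i : Dof i = D.
Proof. rewrite /Dof; case: eqP => // e; by rewrite (eq_irrelevance e erefl). Qed.

Lemma Dof_ne j : j != i -> Dof j = 0.
Proof. by rewrite /Dof; case: eqP. Qed.

Definition phi j := quot (Dof j).

Definition Tq := @LTrellis F n (fun j => qdim (Dof j))
  (fun j => [set (phi j e.1.1, e.1.2, phi (ordS j) e.2) | e in ledge T j]).

Lemma Tq_lin : is_linear T -> is_linear Tq.
Proof.
move=> HL j; case: (HL j) => H0 Hc; split.
  by apply/imsetP; exists (0,0,0) => //=; rewrite /phi !quot0.
move=> a x y /imsetP[ex Hx ->] /imsetP[ey Hy ->]; apply/imsetP.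
exists (tcomb _ _ _ a ex ey); first exact: Hc.
by rewrite /tcomb /phi /= !quot_lin.
Qed.

Lemma Tq_trim : trim T -> trim Tq.
Proof.
move=> HT j y; have [x <-] := quot_surj (Dof j) y.
case: (HT j x) => [[e [He Ee]] [j' [e' [He' Ee']]]]; split.
  exists (phi j e.1.1, e.1.2, phi (ordS j) e.2); split; last by rewrite /= Ee.
  by apply/imsetP; exists e.
exists j', (phi j' e'.1.1, e'.1.2, phi (ordS j') e'.2); split.
  by apply/imsetP; exists e'.
exact: (@tag_map _ (vtx T) (vtx Tq) phi _ _ _ _ Ee').
Qed.

Lemma Tq_merge : obtained_by_merging T Tq.
Proof.
exists phi; split => //.
- by move=> j a x y; rewrite /phi quot_lin.
- move=> j y; exact: quot_surj.
Qed.

Lemma code_sub c : code T c -> code Tq c.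
Proof.
case=> u Hu; exists (fun j => phi j (u j)) => j; apply/imsetP.
by exists (u j, c ord0 j, u (ordS j)); [exact: Hu|].
Qed.

Lemma Tq_smaller : D != 0 -> smaller Tq T.
Proof.
move=> HD; split.
  move=> j; rewrite /= !card_mx !mul1n leq_exp2l ?cardF_gt1 //; exact: qdim_le.
exists i; rewrite /= !card_mx !mul1n ltn_exp2l ?cardF_gt1 // Dof_i; exact: qdim_lt.
Qed.
End Build.

Lemma code_comb (F : finFieldType) n (T : ltrellis F n) (b : F) c1 c2 :
  is_linear T -> code T c1 -> code T c2 -> code T (b *: c1 + c2).
Proof.
move=> HL [u1 H1] [u2 H2].
exists (fun j => (b *: (u1 j : 'rV_(ldim T j)) + u2 j : 'rV_(ldim T j))) => j.
have := (HL j).2 b _ _ (H1 j) (H2 j).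
by rewrite /tcomb /= !mxE.
Qed.

Lemma lift_code (F : finFieldType) n (T : ltrellis F n) :
  is_linear T -> almost_reduced T ->
  forall j0 (v w : 'rV[F]_(ldim T (ordS j0))),
  (forall c, merged_code F n T (Tagged (vtx T) v) (Tagged (vtx T) w) c -> code T c) ->
  forall (c : 'rV[F]_n) (e : forall j, ('rV[F]_(ldim T j) * F * 'rV[F]_(ldim T (ordS j)))%type) (a : F),
  (forall j, e j \in ledge T j) -> (forall j, (e j).1.2 = c ord0 j) ->
  (forall j, j != j0 -> (e j).2 = (e (ordS j)).1.1) ->
  (e j0).2 - (e (ordS j0)).1.1 = a *: (v - w) -> code T c.
Proof.
move=> HL Har j0 v w Hm c e a He Hlab Hnx Hj0.
have [a0|an0] := eqVneq a 0.
  have Hnx' j : (e j).2 = (e (ordS j)).1.1.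
    have [->|/Hnx //] := eqVneq j j0.
    by apply/eqP; rewrite -subr_eq0 Hj0 a0 scale0r.
  exists (fun j => (e j).1.1) => j.
  have -> : ((e j).1.1, c ord0 j, (e (ordS j)).1.1) = e j.
    by rewrite -Hlab -Hnx'; case: (e j) => [[]].
  exact: He.
pose x : 'rV[F]_(ldim T (ordS j0)) := a^-1 *: (e (ordS j0)).1.1.
have [ux [cx [Hx Hux]]] := Har (ordS j0) x.
have [uw [cw [Hw Huw]]] := Har (ordS j0) w.
pose f j := tcomb _ _ _ a^-1 (e j)
   (tcomb _ _ _ (-1) (ux j, cx ord0 j, ux (ordS j)) (uw j, cw ord0 j, uw (ordS j))).
pose c' := a^-1 *: c + ((-1) *: cx + cw).
have Hc' : code T c'.
  apply: Hm; exists f => j; split.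
  - rewrite /f; change (tcomb _ _ _ a^-1 (e j) (tcomb _ _ _ (-1) (ux j, cx ord0 j, ux (ordS j)) (uw j, cw ord0 j, uw (ordS j))) \in ledge T j); exact: ((HL j).2 a^-1 (e j) _ (He j) ((HL j).2 (-1) _ _ (Hx j) (Hw j))).
  - by rewrite /= !mxE Hlab.
  have [->|/Hnx Hj] := eqVneq j j0.
    right; left; split.
      have -> : (f j0).2 = v; last by [].
      move/eqP: Hj0; rewrite subr_eq => /eqP Hj0'.
      rewrite /f /tcomb /= Hj0' Hux Huw /x.
      apply/rowP => k; rewrite !mxE; field; exact: an0.
    have -> : (f (ordS j0)).1.1 = w; last by [].
    rewrite /f /tcomb /= Hux Huw /x.
    apply/rowP => k; rewrite !mxE; field; exact: an0.
  left; have -> : (f j).2 = (f (ordS j)).1.1; last by [].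
  by rewrite /f /tcomb /= Hj.
have -> : c = a *: c' + (a *: cx + ((- a - 1) *: cw + cw)).
  apply/rowP => k; rewrite !mxE; field; exact: an0.
have Cx : code T cx by exists ux.
have Cw : code T cw by exists uw.
by do !apply: code_comb => //.
Qed.

Arguments Dof {F n T i}. Arguments phi {F n T i}. Arguments Tq {F n T i}.
Arguments Dof_i {F n T i}. Arguments Dof_ne {F n T i}.
From Stdlib Require Import ClassicalEpsilon.

Theorem mainTheorem12 (F : finFieldType) (n : nat) (T : ltrellis F n) :
  (0 < n)%N ->
  trim T -> is_linear T -> almost_reduced T ->
  mergeable T ->
  exists T' : ltrellis F n,
    [/\ is_linear T', trim T', obtained_by_merging T T',
        same_code T' T & smaller T' T].
Proof.
move=> n0 Htrim HL Har [i [v [w [vw Hm]]]].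
have [j0 Hi] : exists j0, i = ordS j0 by exists (ord_pred i); rewrite ord_predK.
subst i.
pose D : 'rV[F]_(ldim T (ordS j0)) := (v : 'rV[F]_(ldim T (ordS j0))) - w.
have HD : D != 0 by rewrite subr_eq0; apply/eqP.
exists (Tq D); split.
- exact: Tq_lin.
- exact: Tq_trim.
- exact: Tq_merge.
- move=> c; split; last exact: code_sub.
  case=> u' Hu'.
  have Hex j : exists e, e \in ledge T j /\
     (phi D j e.1.1, e.1.2, phi D (ordS j) e.2) = (u' j, c ord0 j, u' (ordS j)).
    have := Hu' j; case/imsetP => e He Ee; exists e; split => //; by rewrite Ee.
  pose e j := proj1_sig (constructive_indefinite_description _ (Hex j)).
  have He j : e j \in ledge T j /\
     (phi D j (e j).1.1, (e j).1.2, phi D (ordS j) (e j).2) = (u' j, c ord0 j, u' (ordS j)).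
    exact: (proj2_sig (constructive_indefinite_description _ (Hex j))).
  have Hk j : exists a, (e j).2 - (e (ordS j)).1.1 = a *: Dof D (ordS j).
    apply: quot_ker.
    have E1 := congr1 (fun t => t.2) (He j).2.
    have E2 := congr1 (fun t => t.1.1) (He (ordS j)).2.
    rewrite /= in E1 E2; rewrite /phi in E1 E2; by rewrite E1 E2.
  have [a Ha] := Hk j0; rewrite Dof_i in Ha.
  apply: (lift_code _ _ T HL Har j0 v w _ c e a) => //.
  + by move=> c0; case: (Hm c0).
  + by move=> j; case: (He j).
  + by move=> j; case: (He j) => _ /(congr1 (fun t => t.1.2)).
  move=> j Hj; have [b Hb] := Hk j.
  rewrite Dof_ne ?scaler0 in Hb; first by apply/eqP; rewrite -subr_eq0 Hb.
  by rewrite (inj_eq (@ordS_inj n)).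
- exact: Tq_smaller.
Qed.
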